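(* Let $(a_0,\ldots,a_n)$ be a finite sequence of positive integers. For every $\varepsilon>0$ there is $m_0>0$ such that for every integer $m\ge m_0$ and every positive integer $N$, $$\Phi^1(\beta^{N+1})-\Phi^1(\beta^N)<\frac{\varepsilon}{2}.$$
   Context: For positive integers $d_0,d_1,\ldots$, $[d_0,d_1,d_2,\ldots]$ denotes the continued fraction $\cfrac{1}{d_0+\cfrac{1}{d_1+\cfrac{1}{d_2+\cdots}}}$, and for $\beta=[d_0,d_1,\ldots]$ we write $\alpha_j(\beta)=[d_j,d_{j+1},\ldots]$. For integers $m\ge1$, $N\ge1$, $\beta^N$ is the number whose digits (indexed from $0$) are $a_0,\ldots,a_n$ in positions $0,\ldots,n$, $N$ in position $n+m$, and $1$ in all other positions. For such $\beta$ (with $m$ fixed), $\Phi^1(\beta)=\alpha_0(\beta)\alpha_1(\beta)\cdots\alpha_{n+m-1}(\beta)\log\frac{1}{\alpha_{n+m}(\beta)}$. *)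

(* Defs.v *)
From Stdlib Require Import Reals Lra Lia Arith.
From Coquelicot Require Import Coquelicot.
Open Scope R_scope.

Fixpoint cf_fin (d : nat -> nat) (k : nat) : R :=
  match k with
  | O => 0
  | S k' => / (INR (d O) + cf_fin (fun i => d (S i)) k')
  end.

Definition cf (d : nat -> nat) : R := real (Lim_seq (fun k => cf_fin d k)).

Definition alpha (j : nat) (d : nat -> nat) : R := cf (fun i => d (i + j)%nat).

(* Digits of beta^N: a_0..a_n at positions 0..n, N at position n+m, 1 elsewhere. *)
Definition beta_digits (n : nat) (a : nat -> nat) (m N : nat) (i : nat) : nat :=
  if Nat.leb i n then a i
  else if Nat.eqb i (n + m) then N else 1%nat.

Fixpoint prod_alpha (d : nat -> nat) (k : nat) : R :=
  match k with
  | O => 1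
  | S k' => prod_alpha d k' * alpha k' d
  end.

Definition Phi1 (n m : nat) (d : nat -> nat) : R :=
  prod_alpha d (n + m) * ln (/ alpha (n + m) d).

(* Main.v *)
Require Import Defs.
From Stdlib Require Import Reals Lra Lia Arith.
From Coquelicot Require Import Coquelicot.
Open Scope R_scope.

Definition posd (d : nat -> nat) := forall i, (1 <= d i)%nat.

Lemma posd_S d : posd d -> posd (fun i => d (S i)).
Proof. intros H i; apply H. Qed.

Lemma INR_ge1 d i : posd d -> 1 <= INR (d i).
Proof. intros H. replace 1 with (INR 1) by reflexivity. apply le_INR, H. Qed.

Lemma cf_fin_ext k : forall d e, (forall i, d i = e i) -> cf_fin d k = cf_fin e k.
Proof.
  induction k; intros d e H; simpl; auto.
  rewrite (H O), (IHk (fun i => d (S i)) (fun i => e (S i))); auto.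
Qed.

Lemma cf_ext d e : (forall i, d i = e i) -> cf d = cf e.
Proof.
  intros H; unfold cf. f_equal. apply Lim_seq_ext. intros; apply cf_fin_ext; auto.
Qed.

Fixpoint G (d : nat -> nat) (k : nat) (x : R) : R :=
  match k with
  | O => x
  | S k' => / (INR (d O) + G (fun i => d (S i)) k' x)
  end.

Fixpoint Qf (d : nat -> nat) (k : nat) (x : R) : R :=
  match k with
  | O => 1
  | S k' => G d k x * Qf (fun i => d (S i)) k' x
  end.

Lemma G_ext_below k : forall d e x, (forall i, (i < k)%nat -> d i = e i) -> G d k x = G e k x.
Proof.
  induction k; intros d e x H; simpl; auto.
  rewrite (H O) by lia.
  rewrite (IHk (fun i => d (S i)) (fun i => e (S i))); auto.
  intros; apply H; lia.
Qed.

Lemma Qf_ext_below k : forall d e x, (forall i, (i < k)%nat -> d i = e i) -> Qf d k x = Qf e k x.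
Proof.
  induction k; intros d e x H; auto.
  change (G d (S k) x * Qf (fun i => d (S i)) k x = G e (S k) x * Qf (fun i => e (S i)) k x).
  rewrite (G_ext_below (S k) d e) by auto.
  rewrite (IHk (fun i => d (S i)) (fun i => e (S i))); auto.
  intros; apply H; lia.
Qed.

Lemma cf_fin_G k : forall d, cf_fin d k = G d k 0.
Proof. induction k; intros d; simpl; auto. rewrite IHk; auto. Qed.

Lemma G_comp k : forall d j x, G d (k + j) x = G d k (G (fun i => d (i + k)%nat) j x).
Proof.
  induction k; intros d j x; simpl.
  - apply G_ext_below. intros; f_equal; lia.
  - rewrite IHk. do 3 f_equal. apply G_ext_below. intros; f_equal; lia.
Qed.

Lemma G_range k : forall d x, posd d -> 0 <= x <= 1 -> 0 <= G d k x <= 1.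
Proof.
  induction k; intros d x Hd Hx; simpl; auto.
  pose proof (IHk (fun i => d (S i)) x (posd_S d Hd) Hx).
  pose proof (INR_ge1 d O Hd).
  split.
  - left; apply Rinv_0_lt_compat; lra.
  - rewrite <- Rinv_1. apply Rinv_le_contravar; lra.
Qed.

Lemma M_ex k : forall d, posd d -> exists p p' q q' : R,
  0 <= p <= q /\ 1 <= q /\ 0 <= p' /\ 0 <= q' /\
  (q' <= q /\ (p' <= p \/ (q' = 0 /\ p' <= q))) /\
  (p'*q - p*q' = 1 \/ p'*q - p*q' = -1) /\ INR k + 1 <= q + p /\
  (forall x, 0 <= x -> G d k x = (p + p'*x)/(q+q'*x) /\ Qf d k x = /(q+q'*x)).
Proof.
  induction k; intros d Hd.
  - exists 0, 1, 1, 0. simpl.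
    split; [lra|]. split; [lra|]. split; [lra|]. split; [lra|].
    split; [split; [lra| right; split; lra]|].
    split; [left; ring|]. split; [lra|].
    intros x Hx. split; simpl; field.
  - destruct (IHk (fun i => d (S i)) (posd_S d Hd)) as
      (p & p' & q & q' & [Hp0 Hpq] & Hq1 & Hp'0 & Hq'0 & [Hq'q Hor] & Hdet & Hk & Hf).
    set (D := INR (d O)). assert (HD : 1 <= D) by apply INR_ge1, Hd.
    exists q, q', (D*q+p), (D*q'+p').
    rewrite S_INR.
    split; [split; nra|]. split; [nra|]. split; [nra|]. split; [nra|].
    split; [split; [destruct Hor as [Ho|[Ho1 Ho2]]; [nra|]; subst q'; nra | left; lra]|].
    split; [destruct Hdet as [Ho|Ho]; [right|left]; nra|].
    split; [nra|].
    intros x Hx; split.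
    + destruct (Hf x Hx) as [HG HQ]. simpl. fold D. rewrite HG.
      assert (0 < q + q'*x) by nra. field. split; nra.
    + destruct (Hf x Hx) as [HG HQ].
      change (G d (S k) x * Qf (fun i => d (S i)) k x = / (D * q + p + (D * q' + p') * x)).
      simpl. fold D. rewrite HG, HQ.
      assert (0 < q + q'*x) by nra. field. split; nra.
Qed.

Lemma cf_fin_cauchy d k j : posd d -> Rabs (cf_fin d (k + j) - cf_fin d k) <= 2 / (INR k + 1).
Proof.
  intros Hd. rewrite !cf_fin_G, G_comp.
  set (y := G (fun i => d (i + k)%nat) j 0).
  assert (Hy : 0 <= y <= 1). { apply G_range; [intros i; apply Hd | lra]. }
  destruct (M_ex k d Hd) as
      (p & p' & q & q' & [Hp0 Hpq] & Hq1 & Hp'0 & Hq'0 & [Hq'q Hor] & Hdet & Hk & Hf).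
  destruct (Hf y (proj1 Hy)) as [H1 _]. destruct (Hf 0 (Rle_refl 0)) as [H2 _].
  rewrite H1, H2.
  assert (0 < q + q'*y) by nra.
  replace ((p + p' * y) / (q + q' * y) - (p + p' * 0) / (q + q' * 0))
    with ((p'*q - p*q') * y / (q * (q + q'*y))) by (field; lra).
  assert (Habs : Rabs ((p' * q - p * q') * y / (q * (q + q' * y))) = y / (q * (q + q'*y))).
  { unfold Rdiv. rewrite Rabs_mult, Rabs_mult.
    rewrite (Rabs_pos_eq y) by lra.
    rewrite (Rabs_pos_eq (/ _)).
    2:{ left; apply Rinv_0_lt_compat; nra. }
    destruct Hdet as [Hh|Hh]; rewrite Hh; [rewrite Rabs_R1|rewrite Rabs_m1]; ring. }
  rewrite Habs.
  assert (1 <= q * (q + q' * y)) by nra.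
  apply Rle_trans with (1 / q).
  - unfold Rdiv. rewrite Rmult_1_l. apply Rle_trans with (/ (q * (q + q'*y))).
    + rewrite <- (Rmult_1_l (/ (q * _))) at 2. apply Rmult_le_compat_r; [left; apply Rinv_0_lt_compat|]; lra.
    + apply Rinv_le_contravar; nra.
  - assert (0 < INR k + 1) by (pose proof (pos_INR k); lra).
    apply (Rmult_le_reg_r (q * (INR k + 1))). nra.
    field_simplify; try lra.
Qed.

Lemma cf_lim d : posd d -> is_lim_seq (cf_fin d) (cf d).
Proof.
  intros Hd.
  assert (Hex : ex_finite_lim_seq (cf_fin d)).
  { apply ex_lim_seq_cauchy_corr. intros eps.
    destruct (INR_archimed eps 4) as [N HN]. apply (cond_pos eps).
    exists N. intros n m Hn Hm.
    pose proof (cond_pos eps).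
    replace n with (N + (n - N))%nat by lia.
    replace m with (N + (m - N))%nat by lia.
    pose proof (cf_fin_cauchy d N (n - N) Hd).
    pose proof (cf_fin_cauchy d N (m - N) Hd).
    assert (0 < INR N + 1) by (pose proof (pos_INR N); lra).
    assert (2 / (INR N + 1) < eps / 2).
    { apply (Rmult_lt_reg_r (2 * (INR N + 1))). lra. field_simplify; lra. }
    replace (cf_fin d (N + (n - N)) - cf_fin d (N + (m - N)))
      with ((cf_fin d (N + (n - N)) - cf_fin d N) - (cf_fin d (N + (m - N)) - cf_fin d N)) by ring.
    eapply Rle_lt_trans. apply Rabs_triang. rewrite Rabs_Ropp. lra. }
  destruct Hex as [l Hl].
  assert (E : Lim_seq (fun k => cf_fin d k) = l) by (apply is_lim_seq_unique; exact Hl).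
  unfold cf. rewrite E. simpl. exact Hl.
Qed.

Lemma cf_range d : posd d -> 0 <= cf d <= 1.
Proof.
  intros Hd. pose proof (cf_lim d Hd) as Hl.
  split.
  - assert (H := is_lim_seq_le (fun _ => 0) (cf_fin d) 0 (cf d)).
    apply H; auto. intros k. rewrite cf_fin_G. apply G_range; auto; lra.
    apply is_lim_seq_const.
  - assert (H := is_lim_seq_le (cf_fin d) (fun _ => 1) (cf d) 1).
    apply H; auto. intros k. rewrite cf_fin_G. apply G_range; auto; lra.
    apply is_lim_seq_const.
Qed.

Lemma cf_eq d : posd d -> cf d = / (INR (d O) + cf (fun i => d (S i))).
Proof.
  intros Hd. pose proof (cf_lim d Hd) as Hl.
  pose proof (cf_lim _ (posd_S d Hd)) as Hl'.
  pose proof (cf_range _ (posd_S d Hd)).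
  pose proof (INR_ge1 d O Hd).
  apply is_lim_seq_incr_1 in Hl.
  assert (H2 : is_lim_seq (fun k => cf_fin d (S k)) (/ (INR (d O) + cf (fun i => d (S i))))).
  { simpl.
    assert (H3 := is_lim_seq_plus' (fun _ => INR (d O)) _ _ _ (is_lim_seq_const _) Hl').
    assert (H4 := is_lim_seq_inv _ _ H3).
    simpl in H4. apply H4. intro Heq. injection Heq. lra. }
  assert (E := is_lim_seq_unique _ _ Hl). rewrite (is_lim_seq_unique _ _ H2) in E.
  injection E; auto.
Qed.

Lemma alpha0_G k : forall e, posd e -> alpha 0 e = G e k (alpha k e).
Proof.
  induction k; intros e He; simpl.
  - reflexivity.
  - unfold alpha at 1. rewrite (cf_ext _ e) by (intros; f_equal; lia).
    rewrite cf_eq by auto. f_equal. f_equal.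
    transitivity (alpha 0 (fun i => e (S i))).
    { unfold alpha. apply cf_ext. intros; f_equal; lia. }
    rewrite (IHk _ (posd_S e He)). f_equal. unfold alpha. apply cf_ext. intros; f_equal; lia.
Qed.

Lemma prod_alpha_shift k : forall d, prod_alpha d (S k) = alpha 0 d * prod_alpha (fun i => d (S i)) k.
Proof.
  induction k; intros d.
  - simpl. ring.
  - change (prod_alpha d (S (S k))) with (prod_alpha d (S k) * alpha (S k) d).
    rewrite IHk. simpl. rewrite Rmult_assoc. do 2 f_equal.
    unfold alpha. apply cf_ext. intros; f_equal; lia.
Qed.

Lemma prod_Qf k : forall e, posd e -> prod_alpha e k = Qf e k (alpha k e).
Proof.
  induction k; intros e He.
  - reflexivity.
  - rewrite prod_alpha_shift.
    change (Qf e (S k) (alpha (S k) e)) with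
      (G e (S k) (alpha (S k) e) * Qf (fun i => e (S i)) k (alpha (S k) e)).
    rewrite <- alpha0_G by auto.
    rewrite IHk by (apply posd_S; auto). do 2 f_equal.
    unfold alpha. apply cf_ext. intros; f_equal; lia.
Qed.

Lemma ln_le_sub1 t : 0 < t -> ln t <= t - 1.
Proof.
  intros Ht. destruct (Req_dec (ln t) 0) as [H|H].
  - rewrite H. assert (t = 1).
    { rewrite <- (exp_ln t Ht), H. apply exp_0. } lra.
  - pose proof (exp_ineq1 _ H). rewrite exp_ln in H0 by auto. lra.
Qed.

Lemma beta_pos n a m N : (0 < m)%nat -> (0 < N)%nat -> (forall i, (i <= n)%nat -> (0 < a i)%nat) ->
  posd (beta_digits n a m N).
Proof.
  intros Hm HN Ha i. unfold beta_digits.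
  destruct (Nat.leb i n) eqn:E1. apply Nat.leb_le in E1. apply Ha; auto.
  destruct (Nat.eqb i (n + m)); lia.
Qed.

Lemma tail_alpha n a m N : (0 < m)%nat -> (0 < N)%nat -> (forall i, (i <= n)%nat -> (0 < a i)%nat) ->
  alpha (n + m) (beta_digits n a m N) = / (INR N + cf (fun _ => 1%nat)).
Proof.
  intros Hm HN Ha. unfold alpha.
  rewrite cf_eq.
  2:{ intros i. apply (beta_pos n a m N Hm HN Ha). }
  f_equal. f_equal.
  - unfold beta_digits. simpl.
    destruct (Nat.leb (n + m) n) eqn:E1. apply Nat.leb_le in E1; lia.
    rewrite Nat.eqb_refl. reflexivity.
  - apply cf_ext. intros i. unfold beta_digits.
    destruct (Nat.leb (S i + (n + m)) n) eqn:E1. apply Nat.leb_le in E1; lia.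
    destruct (Nat.eqb (S i + (n + m)) (n + m)) eqn:E2. apply Nat.eqb_eq in E2; lia.
    reflexivity.
Qed.

Theorem mainTheorem8 (n : nat) (a : nat -> nat) :
  (forall i : nat, (i <= n)%nat -> (0 < a i)%nat) ->
  forall eps : R, 0 < eps ->
  exists m0 : nat, (0 < m0)%nat /\
    forall m N : nat, (m0 <= m)%nat -> (0 < N)%nat ->
      Phi1 n m (beta_digits n a m (S N)) - Phi1 n m (beta_digits n a m N) < eps / 2.
Proof.
  intros Ha eps Heps.
  destruct (INR_archimed eps 8) as [M HM]; auto.
  exists (S M). split; [lia|].
  intros m N Hm HN.
  assert (Hm0 : (0 < m)%nat) by lia.
  set (d := beta_digits n a m N). set (e := beta_digits n a m (S N)).
  assert (Hd : posd d) by (apply beta_pos; auto).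
  assert (He : posd e) by (apply beta_pos; auto; lia).
  set (K := (n + m)%nat).
  assert (Hde : forall i, (i < K)%nat -> e i = d i).
  { intros i Hi. unfold d, e, beta_digits.
    destruct (Nat.leb i n); auto.
    destruct (Nat.eqb i (n + m)) eqn:E; auto. apply Nat.eqb_eq in E. unfold K in Hi; lia. }
  unfold Phi1. fold K.
  rewrite (prod_Qf K d Hd), (prod_Qf K e He).
  rewrite (Qf_ext_below K e d) by auto.
  unfold d, e, K. rewrite !tail_alpha; auto; try lia.
  fold d.
  set (g := cf (fun _ => 1%nat)).
  assert (Hg : 0 <= g <= 1) by (apply cf_range; intros i; auto).
  assert (HN1 : 1 <= INR N) by (replace 1 with (INR 1) by reflexivity; apply le_INR; lia).
  rewrite S_INR.
  set (B := INR N + g). set (A := INR N + 1 + g).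
  assert (HB : 1 <= B) by (unfold B; lra). assert (HA : A = B + 1) by (unfold A, B; ring).
  rewrite !Rinv_inv.
  destruct (M_ex K d Hd) as
      (p & p' & q & q' & [Hp0 Hpq] & Hq1 & Hp'0 & Hq'0 & [Hq'q Hor] & Hdet & Hk & Hf).
  assert (HX : 0 <= / B) by (left; apply Rinv_0_lt_compat; lra).
  assert (HY : 0 <= / A) by (left; apply Rinv_0_lt_compat; lra).
  change (n + m)%nat with K.   rewrite (proj2 (Hf _ HX)), (proj2 (Hf _ HY)).
  assert (Hq'q2 : q' <= q).
  { destruct Hor as [H|[H1 H2]]; auto. }
  assert (HlnB : 0 <= ln B) by (rewrite <- ln_1; apply ln_le; lra).
  assert (HlnA1 : ln A <= ln B + 1).
  { replace A with (B * (A / B)) by (field; lra).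
    rewrite ln_mult; [| lra | apply Rdiv_lt_0_compat; lra].
    pose proof (ln_le_sub1 (A / B) ltac:(apply Rdiv_lt_0_compat; lra)).
    assert (A / B - 1 <= 1).
    { rewrite HA. replace ((B + 1) / B - 1) with (/ B) by (field; lra).
      rewrite <- Rinv_1. apply Rinv_le_contravar; lra. }
    lra. }
  assert (HlnA2 : / B * ln A <= 1).
  { pose proof (ln_le_sub1 A ltac:(lra)).
    apply Rle_trans with (/ B * B). apply Rmult_le_compat_l; lra.
    rewrite Rinv_l; lra. }
  assert (HlnAp : 0 <= ln A) by (rewrite <- ln_1; apply ln_le; lra).
  set (u := q + q' * / A). set (v := q + q' * / B).
  assert (Hu : q <= u) by (unfold u; nra). assert (Hv : q <= v) by (unfold v; nra).
  assert (Hnum : ln A * v - ln B * u <= 2 * q).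
  { unfold u, v.
    assert (0 <= q' * / A * ln B) by (apply Rmult_le_pos; [nra|lra]).
    assert (q' * (/ B * ln A) <= q') by nra.
    nra. }
  replace (/ u * ln A - / v * ln B) with ((ln A * v - ln B * u) / (u * v)) by (field; lra).
  assert (HK : INR K + 1 <= 2 * q) by lra.
  assert (HKM : INR (S M) <= INR K) by (apply le_INR; unfold K; lia).
  rewrite S_INR in HKM.
  apply Rle_lt_trans with (2 * q / (u * v)).
  - unfold Rdiv. apply Rmult_le_compat_r; [left; apply Rinv_0_lt_compat; nra|lra].
  - apply Rle_lt_trans with (2 / q).
    + assert (Huv : q*q <= u*v) by nra.
      unfold Rdiv. apply Rle_trans with (2*q * /(q*q)).
      * apply Rmult_le_compat_l; [lra| apply Rinv_le_contravar; nra].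
      * right; field; lra.
    + assert (Heq : eps * q > 4) by nra.
      apply (Rmult_lt_reg_r (2 * q)). lra.
      replace (2 / q * (2 * q)) with 4 by (field; lra).
      replace (eps / 2 * (2 * q)) with (eps * q) by field. lra.
Qed.
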